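(* Let $P=\sum_{|\nu|\le d}a_\nu X^\nu\in\mathbb{C}[X_1,\dots,X_n]_{int}$ with $a_\nu\in{}^*\mathbb{C}$ and $d\in{}^*\mathbb{N}$ infinite. Then $P$ is absolutely infinitesimal if and only if $a_0$ is infinitesimal and $|a_\nu|^{1/|\nu|}\in{}^i\mathbb{C}$ for every $\nu\in{}^*\mathbb{N}^n\setminus\{0\}$ with $|\nu|\le d$.
   Context: ${}^*\mathbb{C}$ is an ultrapower of $\mathbb{C}$ by a nonprincipal ultrafilter; ${}^b\mathbb{C}$ (resp. ${}^i\mathbb{C}$) denotes the elements $z$ with $|z|\le r$ for some standard real $r$ (resp. $|z|<r$ for every standard real $r>0$). For finite $n$, $\mathbb{C}[X_1,\dots,X_n]_{int}$ is the ultrapower of $\mathbb{C}[X_1,\dots,X_n]$ (internal polynomials), written uniquely as $\sum_{|\nu|\le d}a_\nu X^\nu$ over $\nu\in{}^*\mathbb{N}^n$ and viewed as internal functions ${}^*\mathbb{C}^n\to{}^*\mathbb{C}$. $|P|:=\sum_{|\nu|\le d}|a_\nu|X^\nu$. $P$ is absolutely infinitesimal if $|P|({}^b\mathbb{C}^n)\subset{}^i\mathbb{C}$. *)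

(* Defs.v *)
From mathcomp Require Import all_boot all_order all_algebra complex.
From mathcomp Require Import all_classical all_reals all_analysis.
Set Implicit Arguments. Unset Strict Implicit. Unset Printing Implicit Defensive.
Import Order.TTheory GRing.Theory Num.Theory.
Local Open Scope classical_set_scope.
Local Open Scope ring_scope.
Local Open Scope complex_scope.

(* The ultrapower *C = C^N / U is handled through representatives:
   a hypercomplex number is a sequence nat -> R[i], a hypernatural is a
   sequence nat -> nat, and an internal statement holds iff it holds
   U-almost everywhere.  All notions below are invariant under U-a.e.
   equality of representatives. *)

Definition nonprincipal_ultrafilter (U : set (set nat)) : Prop :=
  [/\ U setT /\ ~ U set0,
      (forall A B, U A -> U B -> U (A `&` B)),
      (forall A B, A `<=` B -> U A -> U B),
      (forall A, U A \/ U (~` A)) &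
      (forall m : nat, ~ U [set m])].

Definition ae (U : set (set nat)) (P : nat -> Prop) : Prop := U [set k | P k].

Definition hbounded (R : realType) (U : set (set nat)) (z : nat -> R[i]) : Prop :=
  exists r : R, ae U (fun k => `|z k| <= r%:C).

Definition hinfinitesimal (R : realType) (U : set (set nat)) (z : nat -> R[i]) : Prop :=
  forall r : R, 0 < r -> ae U (fun k => `|z k| < r%:C).

Definition hinfinite (U : set (set nat)) (d : nat -> nat) : Prop :=
  forall m : nat, ae U (fun k => (m < d k)%N).

Definition mdeg (n : nat) (nu : 'I_n -> nat) : nat := (\sum_(i < n) nu i)%N.

Definition abs_poly_eval (R : realType) (n : nat) (a : ('I_n -> nat) -> R[i])
  (d : nat) (w : 'I_n -> R[i]) : R[i] :=
  \sum_(nu : {ffun 'I_n -> 'I_d.+1} | (mdeg (fun i => nat_of_ord (nu i)) <= d)%N)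
     `|a (fun i => nat_of_ord (nu i))| * \prod_(i < n) w i ^+ nu i.

(* An internal polynomial P = sum_{|nu| <= d} a_nu X^nu is represented by
   a : nat -> (('I_n -> nat) -> R[i]) (coefficients, a k nu = k-th component
   of a_nu) and d : nat -> nat (the hypernatural degree bound). *)
Definition abs_infinitesimal (R : realType) (U : set (set nat)) (n : nat)
  (a : nat -> ('I_n -> nat) -> R[i]) (d : nat -> nat) : Prop :=
  forall z : nat -> 'I_n -> R[i],
    (forall i : 'I_n, hbounded U (fun k => z k i)) ->
    hinfinitesimal U (fun k => abs_poly_eval (a k) (d k) (z k)).

(* Main.v *)
Require Import Defs.
From mathcomp Require Import all_boot all_order all_algebra complex.
From mathcomp Require Import all_classical all_reals all_analysis.
From mathcomp Require Import lra.
Import Order.TTheory GRing.Theory Num.Theory.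
Local Open Scope ring_scope.
Local Open Scope complex_scope.
Set Implicit Arguments. Unset Strict Implicit.

Section S.
Variable R : realType.

Lemma fin_max (T : finType) (P : pred T) (F : T -> R) :
  (exists x, P x) -> exists x, P x /\ forall y, P y -> F y <= F x.
Proof.
move=> [x0 Px0]; case: (@arg_maxP _ _ T x0 P F Px0) => i Pi H.
by exists i; split => // y /H.
Qed.

Lemma normC_real (x : R) : 0 <= x -> `|x%:C| = x%:C.
Proof. by move=> hx; rewrite ger0_norm // ler0c. Qed.

Lemma normcC (z : R[i]) : `|z| = (Normc.normc z)%:C.
Proof. by []. Qed.

Lemma powR_invK (x : R) (m : nat) : 0 <= x -> (0 < m)%N -> (x `^ (1 / m%:R)) ^+ m = x.
Proof.
move=> hx hm; rewrite -powR_mulrn ?powR_ge0 // -powRrM mul1r mulVf ?powRr1 //.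
by rewrite pnatr_eq0 -lt0n.
Qed.

Lemma geo_bound (x : R) (m : nat) : 0 <= x -> x <= 1/2 -> \sum_(j < m) x ^+ j <= 1 + 2 * x.
Proof.
move=> h0 h1; elim: m => [|m IH]; first by rewrite big_ord0; lra.
rewrite big_ord_recl expr0.
under eq_bigr => i _ do rewrite /bump /= exprS.
rewrite -mulr_sumr. 
have : x * \sum_(i < m) x ^+ i <= x * (1 + 2 * x) by rewrite ler_wpM2l.
nra.
Qed.

Lemma pow_bound (y : R) (n : nat) : 0 <= y -> y <= 1 -> (1 + y) ^+ n <= 1 + 3 ^+ n * y.
Proof.
move=> h0 h1; elim: n => [|n IH]; first by rewrite !expr0; lra.
rewrite !exprS.
have h3 : 1 <= 3 ^+ n :> R by apply: exprn_ege1; lra.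
have h4 : 3 ^+ n * (y * y) <= 3 ^+ n * y by rewrite ler_wpM2l ?(le_trans ler01 h3) //; nra.
have : (1 + y) * (1 + y) ^+ n <= (1 + y) * (1 + 3 ^+ n * y) by rewrite ler_wpM2l //; lra.
nra.
Qed.
Variable n : nat.
Definition natf (d : nat) (f : {ffun 'I_n -> 'I_d.+1}) : 'I_n -> nat := fun i => nat_of_ord (f i).
Definition nu0 (d : nat) : {ffun 'I_n -> 'I_d.+1} := [ffun => ord0].

Lemma natf0 d : natf (nu0 d) = fun _ => 0%N.
Proof. by apply: funext => i; rewrite /natf /nu0 ffunE. Qed.

Lemma natf_eq0 d (f : {ffun 'I_n -> 'I_d.+1}) : natf f = (fun _ => 0%N) -> f = nu0 d.
Proof.
move=> H; apply/ffunP => i; apply: val_inj; rewrite /nu0 ffunE /=.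
by have := congr1 (fun g => g i) H.
Qed.

Lemma mdeg0 : mdeg (fun _ : 'I_n => 0%N) = 0%N.
Proof. by rewrite /mdeg big1. Qed.

Lemma term_ge0 (a : ('I_n -> nat) -> R[i]) (y : R) (nu : 'I_n -> nat) : 0 <= y ->
  0 <= `|a nu| * \prod_(i < n) (fun _ => y%:C) i ^+ nu i.
Proof.
move=> hy; rewrite mulr_ge0 // prodr_ge0 // => i _; rewrite exprn_ge0 // ler0c //.
Qed.

Lemma lower (a : ('I_n -> nat) -> R[i]) (d : nat) (y : R) (f : {ffun 'I_n -> 'I_d.+1}) :
  0 <= y -> (mdeg (natf f) <= d)%N ->
  (Normc.normc (a (natf f)) * y ^+ mdeg (natf f))%:C <= `|abs_poly_eval a d (fun _ => y%:C)|.
Proof.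
move=> hy hf.
have h0 : 0 <= abs_poly_eval a d (fun _ => y%:C).
  by rewrite /abs_poly_eval sumr_ge0 // => nu _; apply: term_ge0.
rewrite ger0_norm // /abs_poly_eval (bigD1 f) //=.
rewrite -[X in X <= _]addr0 lerD //; last by rewrite sumr_ge0 // => nu _; apply: term_ge0.
rewrite prodrXr rmorphM rmorphXn /=.
by [].
Qed.
Lemma sum_all (d : nat) (x : R) :
  \sum_(f : {ffun 'I_n -> 'I_d.+1}) x ^+ mdeg (natf f) = (\sum_(j < d.+1) x ^+ j) ^+ n.
Proof.
rewrite -[n in RHS]card_ord -prodr_const bigA_distr_bigA.
by apply: eq_bigr => f _; rewrite prodrXr.
Qed.

Lemma upper_real (a : ('I_n -> nat) -> R[i]) (d : nat) (r c : R) :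
  0 <= r -> 0 <= c -> c * r <= 1/2 ->
  (forall f : {ffun 'I_n -> 'I_d.+1}, (mdeg (natf f) <= d)%N -> f != nu0 d ->
     Normc.normc (a (natf f)) <= c ^+ mdeg (natf f)) ->
  \sum_(f : {ffun 'I_n -> 'I_d.+1} | (mdeg (natf f) <= d)%N)
     Normc.normc (a (natf f)) * r ^+ mdeg (natf f)
  <= Normc.normc (a (fun _ => 0%N)) + 3 ^+ n * (2 * (c * r)).
Proof.
move=> hr hc hcr hb.
have hx : 0 <= c * r by rewrite mulr_ge0.
have hN : forall z : R[i], 0 <= Normc.normc z.
  by move=> z; have := normr_ge0 z; rewrite normcC ler0c.
rewrite (bigD1 (nu0 d)) /=; last by rewrite natf0 mdeg0.
rewrite natf0 mdeg0 expr0 mulr1 lerD2l.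
apply: (@le_trans _ _ (\sum_(f | (mdeg (natf f) <= d)%N && (f != nu0 d)) (c * r) ^+ mdeg (natf f))).
  apply: ler_sum => f /andP[h1 h2]; rewrite exprMn ler_wpM2r ?exprn_ge0 //; exact: hb.
apply: (@le_trans _ _ (\sum_(f | f != nu0 d) (c * r) ^+ mdeg (natf f))).
  rewrite [X in _ <= X](bigID (fun f : {ffun 'I_n -> 'I_d.+1} => (mdeg (natf f) <= d)%N)) /=.
  rewrite -[X in X <= _]addr0 lerD //; last by rewrite sumr_ge0 // => f _; rewrite exprn_ge0.
  rewrite le_eqVlt; apply/orP; left; apply/eqP; apply: eq_bigl => f; by rewrite andbC.
have := sum_all d (c * r); rewrite (bigD1 (nu0 d)) //= natf0 mdeg0 expr0 => E.
have E2 : \sum_(f | f != nu0 d) (c * r) ^+ mdeg (natf f) = (\sum_(j < d.+1) (c * r) ^+ j) ^+ n - 1.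
  by rewrite -E addrAC subrr add0r.
rewrite E2.
have g1 := geo_bound d.+1 hx hcr.
have g0 : 1 <= \sum_(j < d.+1) (c * r) ^+ j.
  rewrite big_ord_recl expr0 -[X in X <= _]addr0 lerD //.
  by rewrite sumr_ge0 // => j _; rewrite exprn_ge0.
have p1 : (\sum_(j < d.+1) (c * r) ^+ j) ^+ n <= (1 + 2 * (c * r)) ^+ n.
  by apply: lerXn2r; rewrite ?nnegrE //; [apply: (le_trans ler01) | lra].
have p2 := pow_bound n (_ : 0 <= 2 * (c * r)) (_ : 2 * (c * r) <= 1).
have : (1 + 2 * (c * r)) ^+ n <= 1 + 3 ^+ n * (2 * (c * r)) by apply: p2; lra.
lra.
Qed.
Lemma upper (a : ('I_n -> nat) -> R[i]) (d : nat) (z : 'I_n -> R[i]) (r c : R) :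
  0 <= r -> 0 <= c -> c * r <= 1/2 ->
  (forall f : {ffun 'I_n -> 'I_d.+1}, (mdeg (natf f) <= d)%N -> f != nu0 d ->
     Normc.normc (a (natf f)) <= c ^+ mdeg (natf f)) ->
  (forall i, `|z i| <= r%:C) ->
  `|abs_poly_eval a d z| <= (Normc.normc (a (fun _ => 0%N)) + 3 ^+ n * (2 * (c * r)))%:C.
Proof.
move=> hr hc hcr hb hz.
apply: le_trans (ler_norm_sum _ _ _) _.
apply: (@le_trans _ _ ((\sum_(f : {ffun 'I_n -> 'I_d.+1} | (mdeg (natf f) <= d)%N)
     Normc.normc (a (natf f)) * r ^+ mdeg (natf f))%:C)); last first.
  by rewrite lecR; apply: upper_real hb.
rewrite rmorph_sum; apply: ler_sum => f _.
rewrite normrM normr_id normr_prod rmorphM /= -normcC ler_wpM2l //.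
rewrite rmorphXn /= /mdeg -prodrXr; apply: ler_prod => i _.
rewrite normr_ge0 normrX /=; apply: lerXn2r; rewrite ?nnegrE //.
by rewrite ler0c.
Qed.
Lemma mdeg_le (nu : 'I_n -> nat) i : (nu i <= mdeg nu)%N.
Proof. by rewrite /mdeg (bigD1 i) //= leq_addr. Qed.

Lemma mdeg_eq0 (nu : 'I_n -> nat) : mdeg nu = 0%N -> nu = fun _ => 0%N.
Proof. by move=> H; apply: funext => i; apply/eqP; rewrite -leqn0 -H mdeg_le. Qed.

Lemma mdeg_gt0 d (f : {ffun 'I_n -> 'I_d.+1}) : f != nu0 d -> (0 < mdeg (natf f))%N.
Proof.
move=> hf; rewrite lt0n; apply/negP => /eqP /mdeg_eq0 /natf_eq0 E.
by rewrite E eqxx in hf.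
Qed.
End S.

Section UF.
Variable U : set (set nat).
Hypothesis hU : nonprincipal_ultrafilter U.

Lemma ae_T (P : nat -> Prop) : (forall k, P k) -> ae U P.
Proof.
case: hU => [[UT _] _ Um _ _] H; apply: Um UT => k _; exact: H.
Qed.

Lemma ae_mono (P Q : nat -> Prop) : (forall k, P k -> Q k) -> ae U P -> ae U Q.
Proof. case: hU => [_ _ Um _ _] H; apply: Um => k; exact: H. Qed.

Lemma ae_and (P Q : nat -> Prop) : ae U P -> ae U Q -> ae U (fun k => P k /\ Q k).
Proof.
case: hU => [_ UI Um _ _] HP HQ; apply: Um (UI _ _ HP HQ) => k [] /=; by split.
Qed.

Lemma ae_not (P : nat -> Prop) : ~ ae U P -> ae U (fun k => ~ P k).
Proof. case: hU => [_ _ Um Uc _] H; case: (Uc P) => // HH; exact: HH. Qed.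

Lemma ae_notnot (P : nat -> Prop) : ae U (fun k => ~ P k) -> ~ ae U P.
Proof.
case: hU => [[_ U0] UI Um _ _] H1 H2; apply: U0; apply: Um (UI _ _ H1 H2).
by move=> k [].
Qed.

Lemma ae_forall_fin (n : nat) (P : 'I_n -> nat -> Prop) :
  (forall i, ae U (P i)) -> ae U (fun k => forall i, P i k).
Proof.
move=> H.
suff: forall m, ae U (fun k => forall i : 'I_n, (i < m)%N -> P i k).
  by move=> /(_ n); apply: ae_mono => k Hk i; apply: Hk.
elim=> [|m IH]; first by apply: ae_T => k i.
case: (ltnP m n) => hm.
  apply: ae_mono (ae_and IH (H (Ordinal hm))) => k [H1 H2] i hi.
  rewrite ltnS leq_eqVlt in hi; case/orP: hi => [/eqP E|hi]; last exact: H1.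
  by have -> : i = Ordinal hm by apply: val_inj.
apply: ae_mono IH => k Hk i hi; apply: Hk; exact: leq_trans (ltn_ord i) hm.
Qed.
End UF.

Theorem proposition1p4p3 (R : realType) (U : set (set nat)) (n : nat)
  (a : nat -> ('I_n -> nat) -> R[i]) (d : nat -> nat) :
  nonprincipal_ultrafilter U ->
  hinfinite U d ->
  abs_infinitesimal U a d <->
  (hinfinitesimal U (fun k => a k (fun _ => 0%N)) /\
   forall nu : nat -> 'I_n -> nat,
     ~ ae U (fun k => nu k = (fun _ => 0%N)) ->
     ae U (fun k => (mdeg (nu k) <= d k)%N) ->
     hinfinitesimal U
       (fun k => ((Normc.normc (a k (nu k))) `^ (1 / (mdeg (nu k))%:R))%:C)).
Proof.
move=> hU hd; split.
- move=> H; split.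
  + move=> r hr.
    have hb : forall i : 'I_n, hbounded U (fun k => (fun _ : 'I_n => (0 : R)%:C) i).
      by move=> i; exists 0; apply: (@ae_T U hU) => k /=; rewrite normC_real //.
    have := H (fun k _ => (0 : R)%:C) hb r hr.
    apply: (@ae_mono U hU) => k Hk.
    have := @lower R n (a k) (d k) 0 (nu0 n (d k)) (lexx 0).
    rewrite natf0 mdeg0 expr0 mulr1 -normcC => /(_ (leq0n _)) Hl.
    exact: le_lt_trans Hl Hk.
  + move=> nu Hnz Hdeg delta hdelta.
    have hy : 0 <= delta^-1 by rewrite invr_ge0 ltW.
    have hb : forall i : 'I_n, hbounded U (fun k => (fun _ : 'I_n => (delta^-1)%:C) i).
      by move=> i; exists delta^-1; apply: (@ae_T U hU) => k /=; rewrite normC_real //.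
    have := H (fun k _ => (delta^-1)%:C) hb 1 ltr01.
    move=> H1; have := ae_and hU H1 (ae_and hU (ae_not hU Hnz) Hdeg).
    apply: (@ae_mono U hU) => k [Hk [Hnzk Hdk]].
    have hi : forall i, (nu k i < (d k).+1)%N.
      by move=> i; rewrite ltnS (leq_trans (mdeg_le _ i) Hdk).
    pose f : {ffun 'I_n -> 'I_(d k).+1} := [ffun i => inord (nu k i)].
    have Ef : natf f = nu k.
      by apply: funext => i; rewrite /natf ffunE inordK.
    have := @lower R n (a k) (d k) delta^-1 f hy.
    rewrite Ef => /(_ Hdk) Hl.
    have := le_lt_trans Hl Hk; rewrite ltcR => Hlt.
    set m := mdeg (nu k) in Hlt *.
    have hm : (0 < m)%N.
      rewrite lt0n; apply/negP => /eqP /mdeg_eq0; exact: Hnzk.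
    set A := Normc.normc (a k (nu k)) in Hlt *.
    have hA : 0 <= A by have := normr_ge0 (a k (nu k)); rewrite normcC ler0c.
    rewrite normC_real ?powR_ge0 // ltcR.
    set t := A `^ (1 / m%:R).
    have ht : 0 <= t by rewrite powR_ge0.
    have Et : t ^+ m = A by rewrite powR_invK.
    rewrite -Et -exprMn in Hlt.
    have : t * delta^-1 < 1.
      rewrite ltNge; apply/negP => h1.
      have := exprn_ege1 m h1; rewrite leNgt Hlt //.
    by rewrite ltr_pdivrMr // mul1r.
- move=> [H0 Hnu] z hz eps heps.
  have [rs Hrs] := choice hz.
  have Hall := ae_forall_fin hU Hrs.
  set r := 1 + \sum_(i < n) `|rs i|.
  have hr1 : 1 <= r by rewrite /r -[X in X <= _]addr0 lerD // sumr_ge0.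
  have hr : 0 < r by apply: lt_le_trans hr1.
  have hri : forall i, rs i <= r.
    move=> i; apply: le_trans (ler_norm _) _.
    rewrite /r (bigD1 i) //=.
    have : 0 <= \sum_(j < n | j != i) `|rs j| by rewrite sumr_ge0.
    lra.
  pose A k (nu : 'I_n -> nat) := Normc.normc (a k nu).
  pose T k (nu : 'I_n -> nat) := A k nu `^ (1 / (mdeg nu)%:R).
  have hex : forall k, exists mu : 'I_n -> nat,
      [/\ (mdeg mu <= d k)%N,
          (mu = (fun _ => 0%N) -> forall f : {ffun 'I_n -> 'I_(d k).+1},
             (mdeg (natf f) <= d k)%N -> f != nu0 n (d k) -> False) &
          (forall f : {ffun 'I_n -> 'I_(d k).+1},
             (mdeg (natf f) <= d k)%N -> f != nu0 n (d k) -> T k (natf f) <= T k mu)].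
    move=> k.
    case: (pselect (exists f : {ffun 'I_n -> 'I_(d k).+1},
              (mdeg (natf f) <= d k)%N && (f != nu0 n (d k)))) => [Hex|Hnex].
      have [f0 [/andP [Hf1 Hf2] Hmax]] := fin_max (fun f => T k (natf f)) Hex.
      exists (natf f0); split => //.
        by move=> /natf_eq0 E; rewrite E eqxx in Hf2.
      by move=> f h1 h2; apply: Hmax; rewrite h1 h2.
    exists (fun _ => 0%N); split; first by rewrite mdeg0.
      by move=> _ f h1 h2; apply: Hnex; exists f; rewrite h1 h2.
    by move=> f h1 h2; exfalso; apply: Hnex; exists f; rewrite h1 h2.
  have [mu Hmu] := choice hex.
  pose Good k c := 0 <= c /\ forall f : {ffun 'I_n -> 'I_(d k).+1},
     (mdeg (natf f) <= d k)%N -> f != nu0 n (d k) -> A k (natf f) <= c ^+ mdeg (natf f).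
  have Hc : forall delta, 0 < delta -> ae U (fun k => exists c, Good k c /\ c < delta).
    move=> delta hdelta.
    have [hz0 | hnz0] := boolp.EM (ae U (fun k => mu k = (fun _ => 0%N))).
      apply: (@ae_mono U hU) hz0 => k Hk; exists 0; split => //; split => // f h1 h2.
      by case: (Hmu k) => _ /(_ Hk f h1 h2).
    have hdeg : ae U (fun k => (mdeg (mu k) <= d k)%N).
      by apply: (@ae_T U hU) => k; case: (Hmu k).
    have := Hnu mu hnz0 hdeg delta hdelta.
    apply: (@ae_mono U hU) => k Hk; exists (T k (mu k)).
    have hT : 0 <= T k (mu k) by rewrite powR_ge0.
    rewrite normC_real // ltcR in Hk; split => //; split => // f h1 h2.
    case: (Hmu k) => _ _ /(_ f h1 h2) Hle.
    have hAf : 0 <= A k (natf f).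
      by have := normr_ge0 (a k (natf f)); rewrite normcC ler0c.
    rewrite -(powR_invK hAf (mdeg_gt0 h2)).
    by apply: lerXn2r; rewrite ?nnegrE ?powR_ge0.
  set K : R := 3 ^+ n.
  have hK : 0 < K by rewrite exprn_gt0.
  have hd1 : 0 < eps / (4 * K * r) by rewrite divr_gt0 // !mulr_gt0.
  have hd2 : 0 < 1 / (2 * r) by rewrite divr_gt0 // mulr_gt0.
  have hdm : 0 < Num.min (eps / (4 * K * r)) (1 / (2 * r)) by rewrite lt_min hd1 hd2.
  have Hc1 := Hc _ hdm.
  have H0' := H0 (eps / 2) (_ : 0 < eps / 2).
  have := ae_and hU Hc1 (ae_and hU (H0' (divr_gt0 heps (ltr0Sn _ 1))) Hall).
  apply: (@ae_mono U hU) => k [[c [[hc0 hgood] hcd]] [hA0 hzk]].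
  rewrite lt_min in hcd; case/andP: hcd => hc1 hc2.
  rewrite ltr_pdivlMr ?mulr_gt0 // in hc1.
  rewrite ltr_pdivlMr ?mulr_gt0 // in hc2.
  have hcr : c * r <= 1 / 2 by nra.
  have hzr : forall i, `|z k i| <= r%:C.
    by move=> i; apply: le_trans (hzk i) _; rewrite lecR.
  have Hup := upper (ltW hr) hc0 hcr hgood hzr.
  apply: le_lt_trans Hup _; rewrite ltcR.
  rewrite normcC ltcR in hA0.
  rewrite -/K; nra.
Qed.
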